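(* Let $L$ be an even hyperbolic lattice and $L'$ an even overlattice of $L$. Then there exist chambers $\mathcal D_L$ of $L$ and $\mathcal D_{L'}$ of $L'$ (in the common hyperbolic space $\mathbb H_L=\mathbb H_{L'}$) such that $\mathcal D_{L'}\subseteq\mathcal D_L$. For such choices, the exceptional lattices satisfy $E(L)\subseteq E(L')$.
   Context: All lattices are even: a lattice is a free $\mathbb Z$-module $L$ of finite rank with a non-degenerate symmetric bilinear form $(x.y)\in\mathbb Z$ such that $x^2:=(x.x)$ is even for all $x$. $L$ is hyperbolic if its signature is $(1,\mathrm{rk}L-1)$. A root is a vector $r\in L$ with $r^2=-2$. For hyperbolic $L$, fix a connected component $\mathcal P_L$ of $\{x\in L\otimes\mathbb R: x^2>0\}$, let $\mathbb H_L=\{x\in\mathcal P_L: x^2=1\}$, and let $O^+(L)$ be the group of isometries of $L$ preserving $\mathcal P_L$. The Weyl group $W(L)\subseteq O^+(L)$ is generated by the reflections $\phi_r(v)=v+(v.r)r$ for roots $r$. The chambers are the connected components of $\mathbb H_L\setminus\bigcup_r r^\perp$ (union over all roots $r$); $W(L)$ acts simply transitively on them. Fix a chamber $\mathcal D_L$; the symmetry group $\mathrm{Aut}(\mathcal D_L)$ is the subgroup of $O^+(L)$ preserving $\mathcal D_L$. The exceptional lattice $E(L)\subseteq L$ is the sublattice of vectors of $L$ whose orbit under $\mathrm{Aut}(\mathcal D_L)$ is finite. An overlattice of $L$ is a lattice $L'\supseteq L$ of the same rank whose form restricts to that of $L$. *)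

(* Defs.v *)
From HB Require Import structures.
From mathcomp Require Import all_boot all_order all_algebra.
From mathcomp Require Import all_classical all_reals all_analysis.
Set Implicit Arguments. Unset Strict Implicit. Unset Printing Implicit Defensive.
Import Order.TTheory GRing.Theory Num.Theory.
Import numFieldNormedType.Exports.
Local Open Scope classical_set_scope.
Local Open Scope ring_scope.

Section LatticeDefs.
Variables (R : realType) (n : nat).
Notation V := 'rV[R]_n.

(* the (real-bilinear extension of the) form, given by a Gram matrix Q in
   the standard coordinates of V = R^n *)
Definition bform (Q : 'M[R]_n) (x y : V) : R := (x *m Q *m y^T) 0 0.

Definition is_lattice (L : set V) : Prop :=
  exists B : 'M[R]_n, B \in unitmx /\
    L = [set z *m B | z in [set z : V | forall i, z 0 i \is a Num.int]].

Definition even_lattice (Q : 'M[R]_n) (L : set V) : Prop :=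
  forall x y, L x -> L y ->
    bform Q x y \is a Num.int /\ (bform Q x x / 2) \is a Num.int.

Definition pos_cone (Q : 'M[R]_n) (h0 : V) : set V :=
  @connected_component ('rV[R]_n : topologicalType) [set x | 0 < bform Q x x] h0.

Definition hyp_space (Q : 'M[R]_n) (h0 : V) : set V :=
  [set x | pos_cone Q h0 x /\ bform Q x x = 1].

Definition roots (Q : 'M[R]_n) (L : set V) : set V :=
  [set r | L r /\ bform Q r r = -2].

Definition chamber_domain (Q : 'M[R]_n) (h0 : V) (L : set V) : set V :=
  [set x | hyp_space Q h0 x /\ forall r, roots Q L r -> bform Q x r != 0].

Definition is_chamber (Q : 'M[R]_n) (h0 : V) (L : set V) (D : set V) : Prop :=
  exists x, chamber_domain Q h0 L x /\
            D = @connected_component ('rV[R]_n : topologicalType) (chamber_domain Q h0 L) x.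

(* isometries of L, represented by their R-linear extension v |-> v *m M *)
Definition isometry_of (Q : 'M[R]_n) (L : set V) (M : 'M[R]_n) : Prop :=
  M \in unitmx /\ [set v *m M | v in L] = L /\
  forall x y, L x -> L y -> bform Q (x *m M) (y *m M) = bform Q x y.

Definition Oplus (Q : 'M[R]_n) (h0 : V) (L : set V) (M : 'M[R]_n) : Prop :=
  isometry_of Q L M /\ [set v *m M | v in pos_cone Q h0] = pos_cone Q h0.

Definition AutD (Q : 'M[R]_n) (h0 : V) (L : set V) (D : set V)
    (M : 'M[R]_n) : Prop :=
  Oplus Q h0 L M /\ [set v *m M | v in D] = D.

Definition exc_lattice (Q : 'M[R]_n) (h0 : V) (L : set V) (D : set V) : set V :=
  [set v | L v /\ finite_set [set v *m M | M in AutD Q h0 L D]].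

End LatticeDefs.

Definition hyperbolic_form (R : realType) (n : nat) (Q : 'M[R]_n.+1) : Prop :=
  Q^T = Q /\ exists P : 'M[R]_n.+1, P \in unitmx /\
    P *m Q *m P^T = diag_mx (\row_i (if i == ord0 then 1 else -1)).

(* Main.v *)
Require Import Defs.
From HB Require Import structures.
From mathcomp Require Import all_boot all_order all_algebra.
From mathcomp Require Import all_classical all_reals all_analysis.
From mathcomp Require Import ring lra.
Import Order.TTheory GRing.Theory Num.Theory.
Import numFieldNormedType.Exports.
Local Open Scope classical_set_scope.
Local Open Scope ring_scope.
Set Implicit Arguments. Unset Strict Implicit. Unset Printing Implicit Defensive.

Section Aux.
Variables (R : realType) (k : nat).
Notation V := 'rV[R]_k.

Definition IZ a b (z : 'M[int]_(a,b)) : 'M[R]_(a,b) := map_mx (fun x => x%:~R) z.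

Lemma IZM a b c (x : 'M[int]_(a,b)) (y : 'M[int]_(b,c)) : IZ (x *m y) = IZ x *m IZ y.
Proof. exact: (map_mxM (intr : {rmorphism int -> R})). Qed.

Lemma int_rowP (z : V) : (forall i, z 0 i \is a Num.int) <-> exists zi : 'rV[int]_k, z = IZ zi.
Proof.
split.
  move=> H; exists (\row_i Num.floor (z 0 i)); apply/rowP => i.
  rewrite !mxE; apply/eqP; rewrite eq_sym -intrEfloor; exact: H.
move=> [zi ->] i; rewrite mxE; exact: rpred_int.
Qed.

Definition lat (B : 'M[R]_k) : set V :=
  [set z *m B | z in [set z : V | forall i, z 0 i \is a Num.int]].

Lemma latP B v : lat B v <-> exists zi : 'rV[int]_k, v = IZ zi *m B.
Proof.
split.
  by move=> [z /int_rowP [zi ->] <-]; exists zi.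
move=> [zi ->]; exists (IZ zi) => //; apply/int_rowP; by exists zi.
Qed.

Lemma latD B x y : lat B x -> lat B y -> lat B (x + y).
Proof.
move=> /latP [a ->] /latP [b ->]; apply/latP; exists (a + b).
by rewrite -mulmxDl /IZ map_mxD.
Qed.

Lemma latN B x : lat B x -> lat B (- x).
Proof.
move=> /latP [a ->]; apply/latP; exists (- a).
by rewrite -mulNmx /IZ map_mxN.
Qed.

Lemma latB B x y : lat B x -> lat B y -> lat B (x - y).
Proof. by move=> hx hy; apply: latD => //; exact: latN. Qed.

Lemma lat0 B : lat B 0.
Proof. by apply/latP; exists 0; rewrite /IZ map_mx0 mul0mx. Qed.

Lemma latMn B x m : lat B x -> lat B (x *+ m).
Proof.
move=> hx; elim: m => [|m IH]; first by rewrite mulr0n; exact: lat0.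
by rewrite mulrS; apply: latD.
Qed.

Lemma lat_row B i : lat B (row i B).
Proof.
apply/latP; exists (delta_mx 0 i); rewrite rowE; congr (_ *m _).
by apply/matrixP => a b; rewrite !mxE; case: (_ && _).
Qed.

Lemma lat_countable B : countable (lat B).
Proof.
have -> : lat B = [set IZ zi *m B | zi in [set: 'rV[int]_k]].
  apply/seteqP; split => v.
    by move=> /latP [zi ->]; exists zi.
  by move=> [zi _ <-]; apply/latP; exists zi.
apply: (card_le_trans (card_image_le _ _)).
exact: countableP.
Qed.


Lemma bform_full (Q M : 'M[R]_k) : M *m Q *m M^T = Q ->
  forall x y : V, bform Q (x *m M) (y *m M) = bform Q x y.
Proof.
move=> HM x y; rewrite /bform trmx_mul !mulmxA -(mulmxA x M) -(mulmxA x (M *m Q)).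
by rewrite HM.
Qed.

Lemma entry_conj (A X : 'M[R]_k) i j :
  (A *m X *m A^T) i j = (row i A *m X *m (row j A)^T) 0 0.
Proof.
rewrite tr_row colE mulmxA -colE -!row_mul.
by rewrite !mxE.
Qed.

Lemma isom_full (Q B M : 'M[R]_k) : B \in unitmx ->
  (forall x y, lat B x -> lat B y -> bform Q (x *m M) (y *m M) = bform Q x y) ->
  M *m Q *m M^T = Q.
Proof.
move=> uB H.
have E : B *m (M *m Q *m M^T) *m B^T = B *m Q *m B^T.
  apply/matrixP => i j; rewrite !entry_conj.
  have := H _ _ (lat_row B i) (lat_row B j); rewrite /bform => <-.
  by rewrite trmx_mul !mulmxA.
have uBt : B^T \in unitmx by rewrite unitmx_tr.
have := congr1 (fun X => invmx B *m X *m invmx B^T) E.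
by rewrite /= -!mulmxA !mulKmx // !mulmxA !mulmxK.
Qed.

Definition img (A : 'M[R]_k) (P : set V) : set V := [set x *m A | x in P].

Lemma img_mul A B P : img (A *m B) P = img B (img A P).
Proof.
apply/seteqP; split => v.
  by move=> [x Px <-]; exists (x *m A); [exists x|rewrite mulmxA].
by move=> [_ [x Px <-] <-]; exists x => //; rewrite mulmxA.
Qed.

Lemma img1 P : img 1%:M P = P.
Proof.
apply/seteqP; split => v; first by move=> [x Px <-]; rewrite mulmx1.
by move=> Pv; exists v => //; rewrite mulmx1.
Qed.

Lemma img_inv A P : A \in unitmx -> img A P = P -> img (invmx A) P = P.
Proof.
move=> uA H; rewrite -[in LHS]H -img_mul mulmxV // img1 //.
Qed.

Lemma img_id A P x : img A P = P -> P x -> P (x *m A).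
Proof. by move=> H Px; rewrite -H; exists x. Qed.

Lemma img_pre A P y : img A P = P -> P y -> exists2 x, P x & y = x *m A.
Proof. by move=> H; rewrite -{1}H => -[x Px <-]; exists x. Qed.

End Aux.

Section Aux2.
Variables (R : realType) (k : nat).
Notation V := 'rV[R]_k.

Lemma mulmx_continuous (N : 'M[R]_k) : continuous (fun v : V => v *m N).
Proof.
move=> u A /nbhs_ballP[e /= e0 eA].
pose S := \sum_l \sum_j `|N l j|.
have S0 : 0 <= S by apply: sumr_ge0 => l _; apply: sumr_ge0 => j _.
have d0 : 0 < e / (1 + S) by apply: divr_gt0 => //; apply: ltr_wpDr.
apply/nbhs_ballP; exists (e / (1 + S)) => //= v [_ uv]; apply: eA; split => // i j.
rewrite /ball /= !mxE -sumrB.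
apply: (le_lt_trans (ler_norm_sum _ _ _)).
apply: (@le_lt_trans _ _ (\sum_l e / (1 + S) * `|N l j|)).
  apply: ler_sum => l _; rewrite -mulrBl normrM ler_wpM2r //.
  by have := uv i l; rewrite /ball /= => /ltW.
rewrite -mulr_sumr.
apply: (@le_lt_trans _ _ (e / (1 + S) * S)).
  apply: ler_wpM2l; first exact: ltW.
  apply: ler_sum => l _; rewrite (bigD1 j) //= lerDl; apply: sumr_ge0 => *.
  exact: normr_ge0.
have S1 : 0 < 1 + S by apply: ltr_wpDr.
rewrite mulrAC ltr_pdivrMr // ltr_pM2l //.
by rewrite ltr_pwDl.
Qed.

Lemma comp_img (C : set V) (N : 'M[R]_k) x : C x ->
  (forall y, C y -> C (y *m N)) ->
  img N (connected_component C x) `<=` connected_component C (x *m N).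
Proof.
move=> Cx HC; apply: connected_component_max.
- by exists x => //; exact: connected_component_refl.
- by move=> _ [y Hy <-]; apply: HC; exact: connected_component_sub Hy.
- apply: connected_continuous_connected; first exact: component_connected.
  apply: continuous_subspaceT; exact: mulmx_continuous.
Qed.


Definition Good (Q : 'M[R]_k) (h0 : V) (L : set V) (N : 'M[R]_k) :=
  [/\ N \in unitmx, N *m Q *m N^T = Q, img N L = L &
      img N (pos_cone Q h0) = pos_cone Q h0].

Lemma Good_inv Q h0 L N : Good Q h0 L N -> Good Q h0 L (invmx N).
Proof.
move=> [uN HQ HL HP]; split.
- by rewrite unitmx_inv.
- have uNt : N^T \in unitmx by rewrite unitmx_tr.
  have E : invmx N *m (N *m Q *m N^T) *m invmx N^T = Q.
    by rewrite -!mulmxA mulKmx // mulmxV // mulmx1.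
  by rewrite HQ in E; rewrite trmx_inv.
- exact: img_inv.
- exact: img_inv.
Qed.

Lemma Good_mul Q h0 L N M : Good Q h0 L N -> Good Q h0 L M -> Good Q h0 L (N *m M).
Proof.
move=> [uN HQ HL HP] [uM HQ' HL' HP']; split.
- by rewrite unitmx_mul uN uM.
- by rewrite trmx_mul !mulmxA -(mulmxA N M) -(mulmxA N (M *m Q)) HQ'.
- by rewrite img_mul HL HL'.
- by rewrite img_mul HP HP'.
Qed.

Lemma dom_stable Q h0 L N y : Good Q h0 L N ->
  chamber_domain Q h0 L y -> chamber_domain Q h0 L (y *m N).
Proof.
move=> [uN HQ HL HP] [[Hp H1] Hr]; split; [split|].
- exact: img_id HP Hp.
- by rewrite -H1; exact: (bform_full HQ y y).
- move=> r [Lr r2]; have [r' Lr' Er] := img_pre HL Lr; subst r.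
  have -> : bform Q (y *m N) (r' *m N) = bform Q y r' by exact: bform_full.
  apply: Hr; split => //.
  by rewrite -r2; symmetry; exact: (bform_full HQ).
Qed.

Lemma chamber_stable Q h0 L D D' N :
  is_chamber Q h0 L D -> (exists x', D' x') -> D' `<=` D ->
  Good Q h0 L N -> img N D' = D' -> img N D = D.
Proof.
move=> [x0 [Cx0 ->]] [x' D'x'] sD GN HD'.
set C := chamber_domain Q h0 L.
have Dx' : connected_component C x0 x' by apply: sD.
have Cx' : C x' by exact: connected_component_sub Dx'.
rewrite (same_connected_component Dx').
have claim : forall N0, Good Q h0 L N0 -> img N0 D' = D' ->
    img N0 (connected_component C x') `<=` connected_component C x'.
  move=> N0 G0 H0.
  have Dx0 : connected_component C x' (x' *m N0).
    rewrite -(same_connected_component Dx'); apply: sD.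
    exact: img_id H0 D'x'.
  have := @comp_img C N0 x' Cx' (fun y Cy => dom_stable G0 Cy).
  by rewrite -(same_connected_component Dx0).
apply/seteqP; split; first exact: claim.
have [uN _ _ _] := GN.
move=> z Dz; exists (z *m invmx N); last by rewrite mulmxKV.
apply: (claim _ (Good_inv GN)); first exact: img_inv.
by exists z.
Qed.

End Aux2.

Section Aux3.
Variables (R : realType) (k : nat).
Notation V := 'rV[R]_k.

Lemma latZ B (x : V) (z : int) : lat B x -> lat B (z%:~R *: x).
Proof.
move=> /latP [a ->]; apply/latP; exists (z *: a).
rewrite scalemxAl; congr (_ *m _); apply/matrixP => i j; rewrite !mxE.
by rewrite intrM mulrC.
Qed.

Lemma dlemma (B B' : 'M[R]_k) : B \in unitmx -> lat B `<=` lat B' ->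
  exists m : nat, (0 < m)%N /\ forall v, lat B' v -> lat B (m%:R *: v).
Proof.
move=> uB sub.
have /choice [f Hf] : forall i : 'I_k, exists z : 'rV[int]_k, row i B = IZ R z *m B'.
  by move=> i; apply/latP; apply: sub; exact: lat_row.
pose Ci : 'M[int]_k := \matrix_(i, j) f i 0 j.
have EB : B = IZ R Ci *m B'.
  apply/row_matrixP => i; rewrite row_mul Hf; congr (_ *m _).
  by apply/rowP => j; rewrite !mxE.
pose d := \det Ci.
have dE : \det (IZ R Ci) = d%:~R by rewrite (det_map_mx (intr : {rmorphism int -> R})).
have d0 : d != 0.
  move: uB; rewrite EB unitmx_mul => /andP [/[!unitmxE] + _].
  by rewrite dE unitfE intr_eq0.
exists `|d|%N; split; first by rewrite absz_gt0.
move=> v /latP [z ->].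
have key : lat B (d%:~R *: (IZ R z *m B')).
  apply/latP; exists (z *m \adj Ci).
  rewrite EB !IZM -!mulmxA (mulmxA (IZ R (\adj Ci))) -IZM mul_adj_mx.
  rewrite /IZ (map_scalar_mx (intr : {rmorphism int -> R})) /=.
  by rewrite !mulmxA mul_mx_scalar scalemxAl.
rewrite natr_absz; have [dge|dlt] := leP 0 d.
  by rewrite ger0_norm.
rewrite ltr0_norm // intrN scaleNr; exact: latN.
Qed.


Definition liftI (B' : 'M[R]_k) m (t : 'rV['I_m]_k) : V :=
  (\row_j ((t 0 j : nat)%:R)) *m B'.

Lemma reduce (B' : 'M[R]_k) m v : (0 < m)%N -> lat B' v ->
  exists t : 'rV['I_m]_k, exists w, lat B' w /\ v = liftI B' t + m%:R *: w.
Proof.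
move=> m0 /latP [z ->].
have md : (m%:Z != 0) by rewrite eqz_nat -lt0n.
have H : forall j, (absz ((z 0%R j) %% m)%Z < m)%N.
  move=> j; have r0 := modz_ge0 (z 0%R j) md.
  have := ltz_mod (z 0%R j) md; rewrite -{1}(gez0_abs r0) ltz_nat.
  by rewrite absz_nat.
pose t : 'rV['I_m]_k := \row_j Ordinal (H j).
exists t, (IZ R (\row_j ((z 0%R j) %/ m)%Z) *m B'); split.
  by apply/latP; eexists.
rewrite /liftI scalemxAl -mulmxDl; congr (_ *m _).
apply/rowP => j; rewrite !mxE /=.
rewrite natr_absz ger0_norm; last exact: modz_ge0.
by rewrite {1}(divz_eq (z 0%R j) m) intrD intrM addrC mulrC.
Qed.


Definition psi (B' : 'M[R]_k) m (T : {set 'rV['I_m]_k}) : set V :=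
  [set v | lat B' v /\ exists t, t \in T /\ exists w, lat B' w /\ v = liftI B' t + m%:R *: w].

Lemma psiE (B' : 'M[R]_k) m (S : set V) : (0 < m)%N -> S `<=` lat B' ->
  (forall w, lat B' w -> S (m%:R *: w)) ->
  (forall x y, S x -> S y -> S (x - y)) ->
  S = @psi B' m (finset (fun t : 'rV['I_m]_k => `[< S (liftI B' t) >])).
Proof.
move=> m0 sS Sm SB.
have S0 : S 0 by rewrite -(scaler0 _ m%:R); apply: Sm; exact: lat0.
have SD : forall x y, S x -> S y -> S (x + y).
  move=> x y Sx Sy; rewrite -[y]opprK; apply: (SB) => //.
  by rewrite -sub0r; apply: (SB).
apply/seteqP; split => v.
  move=> Sv; have Lv := sS _ Sv; split => //.
  have [t [w [Lw E]]] := reduce m0 Lv.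
  exists t; split; last by exists w.
  rewrite finset.in_set; apply/asboolP.
  have -> : liftI B' t = v - m%:R *: w by rewrite E addrK.
  by apply: (SB) => //; exact: (Sm).
move=> [Lv [t [+ [w [Lw ->]]]]]; rewrite finset.in_set => /asboolP St.
by apply: (SD) => //; exact: (Sm).
Qed.

End Aux3.

Section Aux4.
Variables (R : realType) (k : nat).
Notation V := 'rV[R]_k.

Lemma Aut_Good Q h0 (B' : 'M[R]_k) D' M : B' \in unitmx ->
  AutD Q h0 (lat B') D' M -> Good Q h0 (lat B') M.
Proof.
move=> uB' [[[uM [HLM HbM]] HPM] _]; split => //.
exact: isom_full uB' HbM.
Qed.

Lemma part2 (Q : 'M[R]_k) h0 L L' D D' :
  is_lattice L -> is_lattice L' -> L `<=` L' ->
  is_chamber Q h0 L D -> is_chamber Q h0 L' D' -> D' `<=` D ->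
  exc_lattice Q h0 L D `<=` exc_lattice Q h0 L' D'.
Proof.
move=> [B [uB EL]] [B' [uB' EL']] sLL' chD chD' sD.
change (L = lat B) in EL; change (L' = lat B') in EL'; subst L L'.
move=> v [Lv finO]; split; first exact: sLL'.
set O := [set v *m M | M in AutD Q h0 (lat B) D] in finO.
have [m [m0 Hm]] := dlemma uB sLL'.
have neD' : exists x', D' x'.
  move: chD' => [x' [Cx' ->]]; exists x'; exact: connected_component_refl.
set A' := AutD Q h0 (lat B') D'.
set F := [set img M (lat B) | M in A'].
have Fsub : F `<=` [set @psi R k B' m T | T in [set: {set 'rV['I_m]_k}]].
  move=> _ [M AM <-].
  have [uM _ HLM _] := Aut_Good uB' AM.
  eexists; first by [].
  apply/esym; apply: psiE => //.
  - by move=> _ [x Lx <-]; rewrite -HLM; exists x => //; exact: sLL'.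
  - move=> w Lw; have [w' Lw' ->] := img_pre HLM Lw.
    by exists (m%:R *: w'); [exact: Hm | rewrite scalemxAl].
  - move=> _ _ [x Lx <-] [y Ly <-]; exists (x - y); first exact: latB.
    by rewrite mulmxBl.
have finF : finite_set F.
  apply: (sub_finite_set Fsub); apply: finite_image; exact: finite_finset.
have /choice [rep Hrep] : forall S : set V, exists M0 : 'M[R]_k,
    F S -> A' M0 /\ img M0 (lat B) = S.
  move=> S; case: (pselect (F S)) => [[M AM <-]|nF].
    by exists M.
  by exists 1%:M.
apply: (@sub_finite_set _ _ (\bigcup_(S in F) [set u *m rep S | u in O])).
  move=> _ [M AM <-].
  have FS : F (img M (lat B)) by exists M.
  have [AM0 HS] := Hrep _ FS.
  set M0 := rep (img M (lat B)) in AM0 HS *.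
  exists (img M (lat B)) => //.
  have GM := Aut_Good uB' AM; have GM0 := Aut_Good uB' AM0.
  have [uM0 _ _ _] := GM0.
  have [uM _ _ _] := GM.
  pose N := M *m invmx M0.
  have [uN HQN _ HPN] := Good_mul GM (Good_inv GM0).
  have HLN : img N (lat B) = lat B.
    by rewrite img_mul -HS -img_mul mulmxV // img1.
  have GN : Good Q h0 (lat B) N by split.
  have HDN : img N D' = D'.
    move: AM AM0 => [_ HDM] [_ HDM0].
    change (img M D' = D') in HDM; change (img M0 D' = D') in HDM0.
    by rewrite img_mul HDM img_inv.
  have HDN2 := chamber_stable chD neD' sD GN HDN.
  exists (v *m N); last by rewrite mulmxA mulmxKV.
  exists N => //; split => //; split => //; split => //; split => //.
  move=> x y _ _; exact: bform_full HQN x y.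
apply: bigcup_finite => // S _; exact: finite_image.
Qed.

End Aux4.

Lemma poly_roots_finite (R : realType) (P : {poly R}) :
  P != 0 -> finite_set [set t | P.[t] = 0].
Proof.
move=> P0; apply: contrapT => /(infinite_set_fset (size P)) [Bs sub szB].
have := @max_poly_roots _ P (finmap.enum_fset Bs) P0.
rewrite finmap.fset_uniq.
have -> : all (root P) (finmap.enum_fset Bs).
  apply/allP => x xB; apply/eqP; exact: sub.
by move=> /(_ isT isT); rewrite ltnNge szB.
Qed.

Section Aux5.
Variables (R : realType) (k : nat).
Notation V := 'rV[R]_k.

Definition mom (t : R) : V := \row_i (t ^+ i.+1).

Lemma bformE (Q : 'M[R]_k) (x r : V) :
  bform Q x r = \sum_j x 0 j * (Q *m r^T) j 0.
Proof. by rewrite /bform -mulmxA mxE. Qed.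

Lemma bad_finite (Q : 'M[R]_k) (h0 r : V) : bform Q r r != 0 ->
  finite_set [set t | bform Q (h0 + mom t) r = 0].
Proof.
move=> rr.
pose a := Q *m r^T.
pose P : {poly R} := (bform Q h0 r)%:P + \sum_j (a j 0) *: 'X^(j.+1).
have PE : forall t, P.[t] = bform Q (h0 + mom t) r.
  move=> t; rewrite hornerD hornerC horner_sum !bformE -/a.
  rewrite -big_split /=; apply: eq_bigr => j _.
  by rewrite hornerZ hornerXn !mxE mulrDl [_ * t ^+ _]mulrC.
have [j aj] : exists j, a j 0 != 0.
  case: (pselect (exists j, a j 0 != 0)) => [h|nex]; first exact: h.
  exfalso.
  move/negP: rr; apply; rewrite bformE big1 // => j _.
  have -> : a j 0 = 0.
    by apply/eqP; apply/negPn/negP => H; apply: nex; exists j.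
  by rewrite mulr0.
have P0 : P != 0.
  apply/eqP => /(congr1 (fun p : {poly R} => p`_(j.+1))).
  rewrite coefD coefC /= add0r coef_sumMXn coef0.
  rewrite (eq_bigl (fun i => i == j)); last by move=> i; rewrite eqSS.
  by rewrite big_pred1_eq => /eqP; rewrite (negPf aj).
apply: sub_finite_set (poly_roots_finite P0).
by move=> t /= H; rewrite PE.
Qed.

End Aux5.

Section Aux6.
Variables (R : realType) (k : nat).
Notation V := 'rV[R]_k.

Lemma bformDl (Q : 'M[R]_k) (x y z : V) : bform Q (x + y) z = bform Q x z + bform Q y z.
Proof. by rewrite /bform !mulmxDl mxE. Qed.

Lemma bformDr (Q : 'M[R]_k) (x y z : V) : bform Q z (x + y) = bform Q z x + bform Q z y.
Proof. by rewrite /bform linearD /= mulmxDr mxE. Qed.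

Lemma bformZl (Q : 'M[R]_k) c (x z : V) : bform Q (c *: x) z = c * bform Q x z.
Proof. by rewrite /bform -!scalemxAl mxE. Qed.

Lemma bformZr (Q : 'M[R]_k) c (x z : V) : bform Q z (c *: x) = c * bform Q z x.
Proof. by rewrite /bform linearZ /= -scalemxAr mxE. Qed.

Definition Kq (Q : 'M[R]_k) := \sum_i \sum_j `|Q i j|.

Lemma Kq_ge0 Q : 0 <= Kq Q.
Proof. by apply: sumr_ge0 => i _; apply: sumr_ge0. Qed.

Lemma bform_bound (Q : 'M[R]_k) (x y : V) bx b_y : 0 <= bx -> 0 <= b_y ->
  (forall j, `|x 0 j| <= bx) -> (forall j, `|y 0 j| <= b_y) ->
  `|bform Q x y| <= bx * b_y * Kq Q.
Proof.
move=> bx0 by0 Hx Hy.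
rewrite bformE /Kq mulr_sumr.
apply: (le_trans (ler_norm_sum _ _ _)); apply: ler_sum => i _.
rewrite normrM mxE.
apply: (@le_trans _ _ (bx * `|\sum_j Q i j * y^T j 0|)).
  by apply: ler_wpM2r => //.
rewrite -mulrA ler_wpM2l //.
apply: (le_trans (ler_norm_sum _ _ _)); rewrite mulr_sumr; apply: ler_sum => j _.
by rewrite normrM mxE mulrC ler_wpM2r.
Qed.


Lemma neg_norm (x : R) : - `|x| <= x.
Proof. by rewrite lerNl -normrN ler_norm. Qed.

Lemma pos_near (Q : 'M[R]_k) (h0 : V) : 0 < bform Q h0 h0 ->
  exists2 e, 0 < e /\ e <= 1 &
    forall p : V, (forall j, `|p 0 j| <= e) -> 0 < bform Q (h0 + p) (h0 + p).
Proof.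
move=> q0.
pose H := 1 + \sum_j `|h0 0 j|.
have H0 : 0 <= H by apply: addr_ge0 => //; apply: sumr_ge0.
have Hh : forall j, `|h0 0 j| <= H.
  move=> j; rewrite /H (bigD1 j) //=.
  have : 0 <= \sum_(i < k | i != j) `|h0 0 i| by apply: sumr_ge0.
  lra.
pose K := Kq Q.
have K0 : 0 <= K := Kq_ge0 Q.
pose c := 2 * H * K + K + 1.
have c0 : 0 < c by rewrite /c; apply: ltr_wpDl => //; apply: addr_ge0 => //; apply: mulr_ge0 => //; apply: mulr_ge0.
pose e := Num.min 1 (bform Q h0 h0 / c).
have e0 : 0 < e by rewrite lt_min ltr01 divr_gt0.
have e1 : e <= 1 by rewrite ge_min lexx.
have ec : e * c <= bform Q h0 h0.
  by rewrite -ler_pdivlMr // ge_min lexx orbT.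
exists e => // p Hp.
rewrite !bformDl !bformDr.
have b1 := bform_bound Q (ltW e0) H0 Hp Hh.
have b2 := bform_bound Q H0 (ltW e0) Hh Hp.
have b3 := bform_bound Q (ltW e0) (ltW e0) Hp Hp.
have n1 := neg_norm (bform Q p h0).
have n2 := neg_norm (bform Q h0 p).
have n3 := neg_norm (bform Q p p).
have ee : e * e * K <= e * K by rewrite ler_wpM2r // ger_pMr.
have eq1 : e * H * K = H * e * K by rewrite (mulrC e).
have cE : e * c = 2 * (e * H * K) + e * K + e by rewrite /c; ring.
rewrite -eq1 in b2.
move: b1 b2 b3 n1 n2 n3 ee cE ec.
move: (e * H * K) (e * e * K) (e * K) (e * c) => X Y Z W.
move: (bform Q p h0) (bform Q h0 p) (bform Q p p) (bform Q h0 h0) => a b d q.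
move=> *; lra.
Qed.


Lemma seg_connected (a b : V) (lo hi : R) :
  connected [set a + s *: b | s in `[lo, hi]].
Proof.
apply: connected_continuous_connected; first exact: segment_connected.
apply: continuous_subspaceT => s.
apply: (@continuousD _ _ _ (fun=> a) (fun s : R => s *: b)).
  exact: cst_continuous.
apply: continuousZr_tmp; exact: cvg_id.
Qed.

End Aux6.

Section Aux7.
Variables (R : realType) (k : nat).
Notation V := 'rV[R]_k.

Lemma good_t (Q : 'M[R]_k) (h0 : V) (B' : 'M[R]_k) (e : R) : 0 < e ->
  exists t, `]0, e[%classic t /\
    forall r, Defs.roots Q (lat B') r -> bform Q (h0 + mom k t) r != 0.
Proof.
move=> e0.
pose Bad := \bigcup_(r in Defs.roots Q (lat B')) [set t | bform Q (h0 + mom k t) r = 0].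
have cB : countable Bad.
  apply: bigcup_countable.
    apply: (card_le_trans _ (lat_countable B')).
    by apply: subset_card_le => r [].
  move=> r [_ rr]; apply: finite_set_countable; apply: bad_finite.
  by rewrite rr oppr_eq0.
have [t [Ht nB]] : exists t, `]0, e[%classic t /\ ~ Bad t.
  apply: contrapT => H.
  have sub : `]0, e[%classic `<=` Bad.
    move=> t Ht; apply: contrapT => nB; apply: H; by exists t.
  have : countable `]0, e[%classic by apply: (card_le_trans (subset_card_le sub)).
  move/countable_lebesgue_measure0; rewrite lebesgue_measure_itv /= lte_fin e0.
  by rewrite oppr0 adde0 => -[] /eqP; rewrite gt_eqF.
exists t; split => // r Hr; apply/eqP => H0; apply: nB; by exists r.
Qed.


Lemma exists_dom (Q : 'M[R]_k) (h0 : V) (B' : 'M[R]_k) :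
  0 < bform Q h0 h0 -> exists y, chamber_domain Q h0 (lat B') y.
Proof.
move=> q0.
have [e [e0 e1] Hpos] := pos_near q0.
have [t [Ht Hr]] := good_t Q h0 B' e0.
move: Ht; rewrite /= in_itv /= => /andP [t0 te].
set p := mom k t.
have Hp : forall s, 0 <= s <= 1 -> forall j, `|(s *: p) 0 j| <= e.
  move=> s /andP [s0 s1] j; rewrite !mxE normrM ger0_norm // ger0_norm; last first.
    by apply: exprn_ge0; exact: ltW.
  have : t ^+ j.+1 <= t.
    have t1 : t <= 1 by apply: le_trans e1; exact: ltW.
    by rewrite exprS ger_pMr // exprn_ile1 // ltW.
  move=> h; have : s * t ^+ j.+1 <= t ^+ j.+1 by rewrite ger_pMl ?exprn_gt0.
  move: h (ltW te); lra.
set S := [set z : V | 0 < bform Q z z].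
set x := h0 + p.
have Sx : 0 < bform Q x x.
  by rewrite /x -[p]scale1r; apply: Hpos; apply: Hp; rewrite ler01 lexx.
set qx := bform Q x x in Sx.
set c := (Num.sqrt qx)^-1.
have c0 : 0 < c by rewrite invr_gt0 sqrtr_gt0.
set y := c *: x.
have Cxh : connected_component S h0 x.
  have sub : [set h0 + s *: p | s in `[0, 1]%classic] `<=` connected_component S h0.
    apply: connected_component_max; last exact: seg_connected.
      by exists 0; [rewrite /= in_itv /= lexx ler01 | rewrite scale0r addr0].
    move=> _ [s Hs <-]; apply: Hpos; apply: Hp.
    by move: Hs; rewrite /= in_itv.
  apply: sub; exists 1; last by rewrite scale1r.
  by rewrite /= in_itv /= lexx ler01.
have Cxy : connected_component S x y.
  have sub : [set 0 + s *: x | s in `[Num.min c 1, Num.max c 1]%classic] `<=`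
      connected_component S x.
    apply: connected_component_max; last exact: seg_connected.
      exists 1; last by rewrite add0r scale1r.
      by rewrite /= in_itv /= ge_min le_max !lexx !orbT.
    move=> _ [s Hs <-]; rewrite /S /= add0r bformZl bformZr.
    move: Hs; rewrite /= in_itv /= => /andP [sc _].
    have s0 : 0 < s by apply: lt_le_trans sc; rewrite lt_min c0 ltr01.
    by rewrite !mulr_gt0.
  apply: sub; exists c; last by rewrite add0r.
  by rewrite /= in_itv /= ge_min le_max !lexx.
exists y; split; [split|].
- exact: connected_component_trans Cxh Cxy.
- rewrite /y bformZl bformZr mulrA -expr2 exprVn sqr_sqrtr; last exact: ltW.
  by rewrite mulVf // gt_eqF.
- move=> r Hroot; rewrite /y bformZl mulf_neq0 //; first by rewrite gt_eqF.
  exact: Hr.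
Qed.

End Aux7.

Lemma part1 (R : realType) (k : nat) (Q : 'M[R]_k) (h0 : 'rV[R]_k) L L' :
  is_lattice L' -> L `<=` L' -> 0 < bform Q h0 h0 ->
  exists D D', is_chamber Q h0 L D /\ is_chamber Q h0 L' D' /\ D' `<=` D.
Proof.
move=> [B' [_ EL']] sLL' q0.
change (L' = lat B') in EL'; subst L'.
have [y Cy] := @exists_dom R k Q h0 B' q0.
have sC : chamber_domain Q h0 (lat B') `<=` chamber_domain Q h0 L.
  move=> z [Hz Hr]; split => // r [Lr rr]; apply: Hr; split => //; exact: sLL'.
exists (connected_component (chamber_domain Q h0 L) y),
       (connected_component (chamber_domain Q h0 (lat B')) y).
split; first by exists y; split => //; exact: sC.
split; first by exists y.
apply: connected_component_max; last exact: component_connected.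
  exact: connected_component_refl.
by move=> z /connected_component_sub /sC.
Qed.

Unset Implicit Arguments.
Theorem lemma3p1 (R : realType) (n : nat) (Q : 'M[R]_n.+1)
    (L L' : set 'rV[R]_n.+1) (h0 : 'rV[R]_n.+1) :
  hyperbolic_form Q ->
  is_lattice L -> even_lattice Q L ->
  is_lattice L' -> even_lattice Q L' ->
  L `<=` L' ->
  0 < bform Q h0 h0 ->
  (exists D D', is_chamber Q h0 L D /\ is_chamber Q h0 L' D' /\ D' `<=` D) /\
  (forall D D', is_chamber Q h0 L D -> is_chamber Q h0 L' D' -> D' `<=` D ->
     exc_lattice Q h0 L D `<=` exc_lattice Q h0 L' D').
Proof.
move=> _ HL _ HL' _ sLL' q0; split; first exact: part1.
move=> D D' chD chD' sD; exact: part2.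
Qed.
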